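(* Let $\Omega$ be a Polish space and $\mathcal{P}$ a weakly relatively compact set of Borel probability measures on $\Omega$. There is a countable subset $\mathcal{Q}=\{P_n,\ n\in\mathbb{N}\}$ of $\mathcal{P}$ such that for every $p\in[1,\infty)$ and every $X\in L^1(c_{p,\mathcal{P}})$, $$c_{p,\mathcal{P}}(X)=\sup_{n\in\mathbb{N}}\big(E_{P_n}(|X|^p)\big)^{1/p}.$$ Moreover the capacities $c_{p,\mathcal{P}}$ and $c_{p,\mathcal{Q}}$ (defined on $\mathcal{C}_b(\Omega)$ and extended to all real functions) are equal, and $L^1(c_{p,\mathcal{P}})=L^1(c_{p,\mathcal{Q}})$.
   Context: For a set $\mathcal{R}$ of Borel probability measures and $1\le p<\infty$, $c_{p,\mathcal{R}}(f)=\sup_{P\in\mathcal{R}}E_P(|f|^p)^{1/p}$ for $f\in\mathcal{C}_b(\Omega)$ (a capacity when $\mathcal{R}$ is weakly relatively compact: a monotone seminorm with $\inf_n c(f_n)=0$ for $f_n$ decreasing to $0$). It is extended to all real functions by $c(f)=\sup\{c(\varphi):\varphi\in\mathcal{C}_b(\Omega),0\le\varphi\le f\}$ for $f\ge0$ lower semicontinuous and $c(g)=\inf\{c(f):f\text{ l.s.c.},f\ge|g|\}$ in general. $L^1(c)$ denotes the Banach space obtained as the quotient by $c$-null elements of the closure of $\mathcal{C}_b(\Omega)$ for $c$ in $\{g: c(g)<\infty\}$. Weak topology: the coarsest making $\mu\mapsto\int f\,d\mu$ continuous for every $f\in\mathcal{C}_b(\Omega)$. *)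

(* Defs.v *)
From HB Require Import structures.
From mathcomp Require Import all_boot all_order all_algebra.
From mathcomp Require Import all_classical all_reals all_analysis.
Set Implicit Arguments. Unset Strict Implicit. Unset Printing Implicit Defensive.
Import Order.TTheory GRing.Theory Num.Theory.
Import numFieldNormedType.Exports.
Local Open Scope classical_set_scope.
Local Open Scope ring_scope.

(** Polish space: (the topology of) a complete, separable metric space;
    a metric is a Hausdorff pseudometric. *)
Definition separable_space (T : topologicalType) : Prop :=
  exists D : set T, countable D /\ closure D = [set: T].

Definition polish (R : realType) (T : completePseudoMetricType R) : Prop :=
  hausdorff_space T /\ separable_space T.

Section Capacities.
Context {R : realType} {T : completePseudoMetricType R}.

Definition borel := g_sigma_algebraType (@open T).

Definition probM := probability borel R.
HB.instance Definition _ := gen_eqMixin probM.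
HB.instance Definition _ := gen_choiceMixin probM.

Definition isCb (phi : T -> R) : Prop :=
  continuous phi /\ exists M : R, forall x, `|phi x| <= M.

Definition Cb := {f : T -> R | isCb f}.

Definition integrals (P : probM) : {ptws Cb -> R} :=
  fun f => Rintegral (P : measure borel R) setT (sval f).

Definition weakProb := initial_topology integrals.

Definition weakly_relatively_compact (A : set probM) : Prop :=
  compact (closure (A : set weakProb)).

Local Open Scope ereal_scope.

Definition expect (P : probM) (h : T -> R) : \bar R :=
  \int[(P : measure borel R)]_x (h x)%:E.

Definition capCb (p : R) (Rs : set probM) (phi : T -> R) : \bar R :=
  ereal_sup [set poweR (expect P (fun x => powR `|phi x| p)) p^-1 | P in Rs].


(** extension to nonnegative lower semicontinuous functions *)
Definition capLsc (p : R) (Rs : set probM) (f : T -> R) : \bar R :=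
  ereal_sup [set capCb p Rs phi |
              phi in [set phi | isCb phi /\ forall x, (0 <= phi x <= f x)%R]].

Definition cap (p : R) (Rs : set probM) (g : T -> R) : \bar R :=
  ereal_inf [set capLsc p Rs f |
              f in [set f : T -> R | lower_semicontinuous (fun x => (f x)%:E)
                                     /\ forall x, (`|g x| <= f x)%R]].

(** membership in the closure of C_b (for c) inside {g | c(g) < oo};
    L^1(c) is the quotient of this set by the c-null functions *)
Definition inL1 (p : R) (Rs : set probM) (g : T -> R) : Prop :=
  cap p Rs g < +oo /\
  forall e : R, (0 < e)%R ->
    exists phi : T -> R, isCb phi /\ cap p Rs (fun x => g x - phi x)%R < e%:E.

End Capacities.

(* Main.v *)
Require Import Defs.
From HB Require Import structures.
From mathcomp Require Import all_boot all_order all_algebra.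
From mathcomp Require Import all_classical all_reals all_analysis.
From mathcomp Require Import measurable_realfun.
From mathcomp Require Import lra ring archimedean.
Import Order.TTheory GRing.Theory Num.Theory.
Import numFieldNormedType.Exports.
Local Open Scope classical_set_scope.
Local Open Scope ring_scope.
Set Implicit Arguments. Unset Strict Implicit.

Section S.
Context {R : realType} {T : completePseudoMetricType R}.

Definition dd (c x : T) : R := fine (mine (@edist R T (c, x)) 1%E).

Lemma dd_fin c x : (mine (@edist R T (c, x)) 1%E) \is a fin_num.
Proof.
rewrite ge0_fin_numE; last by rewrite le_min edist_ge0 lee01.
by rewrite (@le_lt_trans _ _ 1%E) // ?ge_min ?lexx ?orbT ?ltry.
Qed.

Lemma dd_ge0 c x : 0 <= dd c x.
Proof. by rewrite /dd fine_ge0 // le_min edist_ge0 lee01. Qed.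

Lemma dd_le1 c x : dd c x <= 1.
Proof. by rewrite /dd -lee_fin fineK ?dd_fin // ge_min lexx orbT. Qed.

Lemma dd_ball c x e : dd c x < e -> e <= 1 -> ball c e x.
Proof.
move=> h e1; apply: (@edist_lt_ball _ _ e (c, x)).
move: h; rewrite /dd -lte_fin fineK ?dd_fin //.
rewrite gt_min => /orP[//|]; rewrite lte_fin => h1.
by have := lt_le_trans h1 e1; rewrite ltxx.
Qed.

Lemma ball_dd c x e : 0 < e -> ball c e x -> dd c x <= e.
Proof.
move=> e0 b; rewrite /dd -lee_fin fineK ?dd_fin //.
by rewrite ge_min (@edist_fin _ _ e (c, x)).
Qed.

Lemma dd_lip c x y e : 0 < e -> ball y e x -> dd c x <= dd c y + e.
Proof.
move=> e0 b; rewrite /dd -lee_fin EFinD !fineK ?dd_fin //.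
have h := @edist_triangle R T c y x.
have hyx := @edist_fin R T e (y, x) e0 b.
rewrite ge_min; case: (leP (@edist R T (c, y)) 1%E) => hc.
- apply/orP; left.
  exact: (le_trans h (leeD2l _ hyx)).
- apply/orP; right.
  by rewrite leeDl // lee_fin ltW.
Qed.


Lemma dd_cont c : continuous (dd c).
Proof.
move=> x; apply/cvgrPdist_le => e e0.
near=> y.
have bxy : ball x e y by near: y; apply: nbhsx_ballx.
rewrite ler_norml; apply/andP; split.
- have := dd_lip c e0 bxy; lra.
- have := dd_lip c e0 (ball_sym bxy); lra.
Unshelve. all: by end_near.
Qed.

Definition hat (c : T) (h : R) (n : nat) (x : T) : R :=
  h * Num.max 0 (1 - n.+1%:R * dd c x).

Lemma hat_ge0 c h n x : 0 <= h -> 0 <= hat c h n x.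
Proof. by move=> h0; rewrite /hat mulr_ge0 // le_max lexx. Qed.

Lemma hat_leh c h n x : 0 <= h -> hat c h n x <= h.
Proof.
move=> h0; rewrite /hat ler_piMr // ge_max ler01 /=.
have := dd_ge0 c x; have : (0 <= n.+1%:R :> R) by [].
move=> h1 h2; rewrite lerBlDr lerDl; exact: mulr_ge0.
Qed.

Lemma hat_lb c h n x : 0 <= h -> h * (1 - n.+1%:R * dd c x) <= hat c h n x.
Proof. by move=> h0; rewrite /hat ler_wpM2l // le_max lexx orbT. Qed.

Lemma hat_pos c h n x : 0 < hat c h n x -> dd c x < n.+1%:R^-1.
Proof.
move=> hp.
have k0 : (0 < n.+1%:R :> R) by [].
have h1 : 0 < 1 - n.+1%:R * dd c x.
  case: (leP (1 - n.+1%:R * dd c x) 0) => // hle.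
  by move: hp; rewrite /hat max_l // mulr0 ltxx.
rewrite -(ltr_pM2l k0) mulfV ?gt_eqF //; lra.
Qed.

Lemma hat_cont c h n : continuous (hat c h n).
Proof.
move=> x; apply: cvgM; first exact: cvg_cst.
apply: (continuous_max (f := cst 0) (g := fun x => 1 - n.+1%:R * dd c x)).
  exact: cvg_cst.
apply: cvgB; first exact: cvg_cst.
apply: cvgM; first exact: cvg_cst.
exact: dd_cont.
Qed.

Definition I := (nat * nat * nat * nat)%type.

Definition hatI (ds : nat -> T) (i : I) : T -> R :=
  let: (j, a, b, n) := i in hat (ds j) (a%:R / b.+1%:R) n.

Definition heightI (i : I) : R := let: (j, a, b, n) := i in a%:R / b.+1%:R.

Lemma heightI_ge0 i : 0 <= heightI i.
Proof. by case: i => [[[j a] b] n] /=; rewrite divr_ge0. Qed.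

Lemma hatI_ge0 ds i x : 0 <= hatI ds i x.
Proof. by case: i => [[[j a] b] n] /=; rewrite hat_ge0 // divr_ge0. Qed.

Lemma hatI_le ds i x : hatI ds i x <= heightI i.
Proof. by case: i => [[[j a] b] n] /=; rewrite hat_leh // divr_ge0. Qed.

Lemma hatI_cont ds i : continuous (hatI ds i).
Proof. by case: i => [[[j a] b] n] /=; apply: hat_cont. Qed.

Definition gf (ds : nat -> T) (s : seq I) (x : T) : R :=
  \big[Num.max/0]_(i <- s) hatI ds i x.

Lemma gf_ge0 ds s x : 0 <= gf ds s x.
Proof.
elim: s => [|i s IH]; first by rewrite /gf big_nil.
by rewrite /gf big_cons le_max IH orbT.
Qed.

Lemma gf_ub ds s x : gf ds s x <= \sum_(i <- s) heightI i.
Proof.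
elim: s => [|i s IH]; first by rewrite /gf big_nil big_nil.
rewrite /gf !big_cons ge_max; apply/andP; split.
- rewrite (le_trans (hatI_le ds i x)) // lerDl.
  by apply: sumr_ge0 => j _; apply: heightI_ge0.
- rewrite (le_trans IH) // lerDr; exact: heightI_ge0.
Qed.

Lemma gf_mem ds s i x : i \in s -> hatI ds i x <= gf ds s x.
Proof.
elim: s => [|k s IH] //; rewrite inE => /orP[/eqP ->|/IH h].
  by rewrite /gf big_cons le_max lexx.
by rewrite /gf big_cons le_max h orbT.
Qed.

Lemma gf_sub ds s t x : {subset s <= t} -> gf ds s x <= gf ds t x.
Proof.
elim: s => [|k s IH] st; first by rewrite /gf big_nil gf_ge0.
rewrite /gf big_cons ge_max; apply/andP; split.
  by apply: gf_mem; apply: st; rewrite inE eqxx.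
by apply: IH => i si; apply: st; rewrite inE si orbT.
Qed.

Lemma gf_le ds s (g : T -> R) x : (forall x, 0 <= g x) ->
  (forall i, i \in s -> hatI ds i x <= g x) -> gf ds s x <= g x.
Proof.
move=> g0; elim: s => [|k s IH] h; first by rewrite /gf big_nil.
rewrite /gf big_cons ge_max; apply/andP; split.
  by apply: h; rewrite inE eqxx.
by apply: IH => i si; apply: h; rewrite inE si orbT.
Qed.

Lemma gf_cont ds s : continuous (gf ds s).
Proof.
elim: s => [|k s IH].
  by rewrite /gf; under eq_fun do rewrite big_nil; apply: cst_continuous.
have -> : gf ds (k :: s) = (hatI ds k \max gf ds s).
  by apply/funext => x; rewrite /gf big_cons.
by move=> x; apply: continuous_max; [exact: hatI_cont|exact: IH].
Qed.

Lemma gf_Cb ds s : isCb (gf ds s).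
Proof.
split; first exact: gf_cont.
exists (\sum_(i <- s) heightI i) => x.
by rewrite ger0_norm ?gf_ge0 // gf_ub.
Qed.
Lemma exist_hat (ds : nat -> T)
  (dense : forall x e, 0 < e -> exists j, ball x e (ds j))
  (g : T -> R) : lower_semicontinuous (fun x => (g x)%:E) ->
  (forall x, 0 <= g x) ->
  forall x t, t < g x ->
  exists i, (forall y, hatI ds i y <= g y) /\ t < hatI ds i x.
Proof.
move=> lg g0 x t tgx.
have [tneg|tpos] := ltP t 0.
  exists (0%N, 0%N, 0%N, 0%N); split.
    move=> y; apply: le_trans (g0 y).
    by have := hatI_le ds (0%N, 0%N, 0%N, 0%N) y; rewrite /= mul0r.
  by apply: lt_le_trans tneg _; apply: hatI_ge0.
pose t' := (t + g x) / 2.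
have tt' : t < t' by rewrite /t'; lra.
have t'g : t' < g x by rewrite /t'; lra.
have [V Vx Vg] := lg x t' (t'g : (t'%:E < (g x)%:E)%E).
move/nbhs_ballP : Vx => [eps eps0 bV].
pose r := Num.min eps 1.
have r0 : 0 < r by rewrite /r lt_min eps0 ltr01.
have r1 : r <= 1 by rewrite /r ge_min lexx orbT.
have re : r <= eps by rewrite /r ge_min lexx.
have bV' : ball x r `<=` V.
  by move=> y bxy; apply: bV; apply: (le_ball re) bxy.
have [b hb] := ltr_add_invr tt'.
pose a := (Num.truncn (t * b.+1%:R)).+1.
pose q : R := a%:R / b.+1%:R.
have bpos : (0 < b.+1%:R :> R) by [].
have tq : t < q.
  rewrite /q ltr_pdivlMr // /a.
  exact: truncnS_gt.
have qt' : q < t'.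
  apply: le_lt_trans hb.
  have bne : (b.+1%:R != 0 :> R) by rewrite pnatr_eq0.
  have ha : a%:R <= t * b.+1%:R + 1.
    by rewrite /a -natr1 lerD2r truncn_le mulr_ge0.
  rewrite /q ler_pdivrMr // mulrDl mulVf //.
have q0 : 0 < q by apply: le_lt_trans tq.
have r20 : 0 < r / 2 by rewrite divr_gt0.
have [n hn] := ltr_add_invr r20.
rewrite add0r in hn.
pose del := Num.min (r / 2) ((q - t) / (q * n.+1%:R)).
have del0 : 0 < del.
  by rewrite /del lt_min divr_gt0 //= divr_gt0 ?subr_gt0 // mulr_gt0.
have [j hj] := dense x (del / 2) (divr_gt0 del0 (ltr0Sn R 1)).
have hd : dd (ds j) x <= del / 2.
  by apply: ball_dd; [exact: divr_gt0 del0 (ltr0Sn R 1)|exact: ball_sym].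
have kpos : (0 < n.+1%:R :> R) by [].
exists (j, a, b, n); split; last first.
  change (t < hat (ds j) q n x).
  have hd2 : dd (ds j) x < (q - t) / (q * n.+1%:R).
    apply: le_lt_trans hd _.
    have : del <= (q - t) / (q * n.+1%:R) by rewrite /del ge_min lexx orbT.
    have := del0. move: (del) => dl. move: ((q - t) / (q * n.+1%:R)) => Xq. lra.
  apply: lt_le_trans (hat_lb _ _ _ (ltW q0)).
  move: hd2; rewrite ltr_pdivlMr ?mulr_gt0 // => hd2.
  have e : q * (1 - n.+1%:R * dd (ds j) x) = q - dd (ds j) x * (q * n.+1%:R).
    by ring.
  rewrite e; lra.
move=> y; change (hat (ds j) q n y <= g y).
have [hy|hy] := leP (hat (ds j) q n y) 0; first exact: le_trans hy (g0 y).
have hp := hat_pos hy.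
have bcy : ball (ds j) (r / 2) y.
  apply: dd_ball; last by lra.
  by apply: lt_trans hp hn.
have delr : del / 2 <= r / 2.
  have : del <= r / 2 by rewrite /del ge_min lexx.
  have := del0; lra.
have bxc : ball x (r / 2) (ds j) by apply: (le_ball delr).
have bxy := ball_triangle bxc bcy.
have Vy : V y by apply: bV'; move: bxy; rewrite -splitr.
have := Vg y Vy; rewrite lte_fin => h.
apply: le_trans (hat_leh _ _ _ (ltW q0)) _; lra.
Qed.
Section approx.
Variables (ds : nat -> T) (g : T -> R).
Let adm (i : I) := forall y, hatI ds i y <= g y.
Let fk (k : nat) : option I :=
  if choice.unpickle k is Some i then (if `[< adm i >] then Some i else None)
  else None.
Definition sN (N : nat) : seq I := pmap fk (iota 0 N).

Lemma sN_adm N i : i \in sN N -> adm i.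
Proof.
rewrite /sN mem_pmap => /mapP[k _]; rewrite /fk.
case: (choice.unpickle k) => // i'.
by case: asboolP => // h [->].
Qed.

Lemma sN_mem N i : adm i -> (choice.pickle i < N)%N -> i \in sN N.
Proof.
move=> ai lt; rewrite /sN mem_pmap; apply/mapP; exists (choice.pickle i).
  by rewrite mem_iota add0n.
by rewrite /fk choice.pickleK; case: asboolP.
Qed.

Lemma sN_sub N M : (N <= M)%N -> {subset sN N <= sN M}.
Proof.
move=> NM i; rewrite /sN !mem_pmap => /mapP[k kN ->]; apply: map_f.
by move: kN; rewrite !mem_iota !add0n => /andP[-> /leq_trans]; apply.
Qed.
End approx.

Lemma approx_lsc (ds : nat -> T)
  (dense : forall x e, 0 < e -> exists j, ball x e (ds j))
  (g : T -> R) : lower_semicontinuous (fun x => (g x)%:E) ->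
  (forall x, 0 <= g x) ->
  [/\ forall n x, gf ds (sN ds g n) x <= g x,
      forall x, nondecreasing_seq (fun n => gf ds (sN ds g n) x) &
      forall x, (fun n => gf ds (sN ds g n) x) @ \oo --> g x].
Proof.
move=> lg g0; split.
- move=> n x; apply: gf_le => // i /sN_adm; exact.
- move=> x n m nm; apply: gf_sub; exact: sN_sub.
- move=> x; apply/cvgrPdist_le => e e0.
  have ex : g x - e < g x by rewrite ltrBlDr ltrDl.
  have [i [ai hi]] := exist_hat dense lg g0 ex.
  near=> N.
  have iN : i \in sN ds g N by apply: sN_mem => //; near: N; exists (choice.pickle i).+1.
  have h1 := gf_mem ds x iN.
  have h2 : gf ds (sN ds g N) x <= g x by apply: gf_le => // k /sN_adm; exact.
  rewrite ger0_norm ?subr_ge0 //; move: h1 h2 hi.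
  move: (gf _ _ _) (hatI _ _ _) => u v; lra.
Unshelve. all: by end_near.
Qed.
Lemma lsc_measurable (f : T -> R) : lower_semicontinuous (fun x => (f x)%:E) ->
  measurable_fun [set: @borel R T] f.
Proof.
move=> lf mD; apply: (measurability _ (RGenOInfty.measurableE R)) => //.
move=> _ [_ [a ->] <-]; rewrite setTI.
apply: sub_sigma_algebra.
have := (lower_semicontinuousP _).1 lf a.
congr open; apply/seteqP; split => x /=; rewrite in_itv /= andbT lte_fin //.
Qed.

Lemma cont_lsc (f : T -> R) : continuous f -> lower_semicontinuous (fun x => (f x)%:E).
Proof.
move=> cf x a; rewrite lte_fin => ax.
exists [set y | a < f y]; last by move=> y /=; rewrite lte_fin.
have e0 : f x - a > 0 by rewrite subr_gt0.
have H := (cvgrPdist_lt _ _).1 (cf x) _ e0.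
near=> y.
have : `|f x - f y| < f x - a by near: y; exact: H.
rewrite ltr_norml => /andP[_] h; rewrite /=; lra.
Unshelve. all: by end_near.
Qed.

Lemma expect_approx (ds : nat -> T)
  (dense : forall x e, 0 < e -> exists j, ball x e (ds j))
  (g : T -> R) (lg : lower_semicontinuous (fun x => (g x)%:E))
  (g0 : forall x, 0 <= g x) (P : @probM R T) (a : \bar R) :
  (a < expect P g)%E -> exists N, (a < expect P (gf ds (sN ds g N)))%E.
Proof.
have [Hle Hnd Hcv] := approx_lsc dense lg g0.
pose G N x := ((gf ds (sN ds g N) x)%:E : \bar R).
have mG N : measurable_fun [set: @borel R T] (G N).
  apply/measurable_EFinP; apply: lsc_measurable; apply: cont_lsc; exact: gf_cont.
have G0 N x : [set: @borel R T] x -> (0 <= G N x)%E by move=> _; rewrite lee_fin gf_ge0.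
have ndG x : [set: @borel R T] x -> nondecreasing_seq (G^~ x).
  by move=> _ n m nm; rewrite lee_fin; apply: Hnd.
have mct := monotone_convergence P measurableT mG G0 ndG.
have e : (expect P g = \int[P]_(x in [set: @borel R T]) limn (G^~ x))%E.
  apply: eq_integral => x _.
  change ((g x)%:E = limn (EFin \o (fun N => gf ds (sN ds g N) x))).
  rewrite EFin_lim; last by apply/cvg_ex; exists (g x); exact: Hcv.
  by rewrite (cvg_lim _ (Hcv x)).
rewrite e mct.
have ndI : nondecreasing_seq (fun N => (\int[P]_(x in [set: @borel R T]) G N x)%E).
  move=> n m nm; apply: ge0_le_integral => //.
  + by move=> x _; rewrite /G lee_fin gf_ge0.
  + by move=> x _; apply: ndG.
rewrite (cvg_lim _ (ereal_nondecreasing_cvgn ndI)) // => /ereal_sup_gt[_ [N _ <-] h].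
by exists N.
Qed.
Local Open Scope ereal_scope.
Lemma le_by_lt (x y : \bar R) : (forall a : R, a%:E < x -> a%:E <= y) -> x <= y.
Proof.
move=> h; rewrite leNgt; apply/negP => yx.
case: y yx h => [y| |] yx h.
- case: x yx h => [x| |] // yx h.
  + rewrite lte_fin in yx.
    have hh : ((y + x) / 2)%:E < x%:E by rewrite lte_fin; lra.
    by have := h _ hh; rewrite lee_fin; lra.
  + have hh : (y + 1)%:E < +oo by apply: ltry.
    by have := h _ hh; rewrite lee_fin; lra.
- by move: yx; rewrite ltNge leey.
- case: x yx h => [x| |] // yx h.
  + have hh : (x - 1)%:E < x%:E by rewrite lte_fin; lra.
    by have := h _ hh; rewrite leeNy_eq.
  + by have := h 0%R (ltry 0); rewrite leeNy_eq.
Qed.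
Local Close Scope ereal_scope.

Lemma powR_invK (a r : R) : 0 <= a -> 0 < r -> powR (powR a r^-1) r = a.
Proof. by move=> a0 r0; rewrite -powRrM mulVf ?gt_eqF // powRr1. Qed.

Lemma poweR_lc (y : \bar R) (r a : R) : 0 < r -> 0 <= a -> (0 <= y)%E ->
  (a%:E < poweR y r)%E -> exists b : R, [/\ 0 <= b, (b%:E < y)%E & a < powR b r].
Proof.
case: y => [y| |] // r0 a0 y0 h.
- rewrite poweR_EFin lte_fin in h; rewrite lee_fin in y0.
  pose c := powR a r^-1.
  have c0 : 0 <= c by apply: powR_ge0.
  have cy : c < y.
    rewrite ltNge; apply/negP => yc.
    have := ge0_ler_powR (ltW r0) y0 c0 yc; rewrite powR_invK //; lra.
  exists ((c + y) / 2); split; first by lra.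
    by rewrite lte_fin; lra.
  rewrite -[a in a < _](powR_invK a0 r0) -/c.
  apply: gt0_ltr_powR => //; rewrite ?nnegrE; lra.
- exists (powR (a + 1) r^-1); split; [exact: powR_ge0|exact: ltry|].
  rewrite powR_invK //; lra.
Qed.
Lemma powR_cont_pos (r a : R) : 0 < a -> {for a, continuous (fun b : R => powR b r)}.
Proof.
move=> a0.
have e : powR a r = expR (r * ln a) by rewrite /powR gt_eqF.
apply: (@cvg_trans _ ((fun b => expR (r * ln b)) @ a)).
  apply: near_eq_cvg; near=> b; rewrite /powR gt_eqF //.
  by near: b; exact: lt_nbhsr.
rewrite e.
apply: (continuous_comp (f := fun b => r * ln b) (g := @expR R)).
  apply: cvgM; first exact: cvg_cst.
  exact: continuous_ln.
exact: continuous_expR.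
Unshelve. all: by end_near.
Qed.

Lemma expect_le (P : @probM R T) (u v : T -> R) : (forall x, 0 <= u x) ->
  (forall x, u x <= v x) -> (expect P u <= expect P v)%E.
Proof.
move=> u0 uv; rewrite /expect !ge0_integralTE; last 2 first.
- by move=> x; rewrite lee_fin (le_trans (u0 x)).
- by move=> x; rewrite lee_fin.
apply: ereal_sup_le => _ [h hu <-]; exists h => // x.
by apply: le_trans (hu x) _; rewrite lee_fin.
Qed.

Lemma expect_ge0 (P : @probM R T) (u : T -> R) : (forall x, 0 <= u x) ->
  (0 <= expect P u)%E.
Proof. by move=> u0; apply: integral_ge0 => x _; rewrite lee_fin. Qed.

Definition nrm (p : R) (P : @probM R T) (h : T -> R) : \bar R :=
  poweR (expect P (fun x => powR `|h x| p)) p^-1.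

Lemma nrm_ge0 p P h : (0 <= nrm p P h)%E.
Proof. exact: poweR_ge0. Qed.

Lemma nrm_le p P (u v : T -> R) : 0 < p -> (forall x, `|u x| <= `|v x|) ->
  (nrm p P u <= nrm p P v)%E.
Proof.
move=> p0 uv; apply: gt0_ler_poweR; first by rewrite invr_ge0 ltW.
- by rewrite in_itv /= leey andbT; apply: expect_ge0 => x; exact: powR_ge0.
- by rewrite in_itv /= leey andbT; apply: expect_ge0 => x; exact: powR_ge0.
apply: expect_le => x; first exact: powR_ge0.
by apply: ge0_ler_powR; rewrite ?nnegrE // ltW.
Qed.
Lemma mpow (h : T -> R) (p : R) : measurable_fun [set: @borel R T] h ->
  measurable_fun [set: @borel R T] (fun x => powR `|h x| p).
Proof.
move=> mh.
apply: (@measurableT_comp _ _ _ _ _ _ (@powR R ^~ p)); first exact: measurable_powR.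
by apply: measurableT_comp => //; exact: normr_measurable.
Qed.

Lemma expect_pow_approx (ds : nat -> T)
  (dense : forall x e, 0 < e -> exists j, ball x e (ds j))
  (f : T -> R) (lf : lower_semicontinuous (fun x => (f x)%:E))
  (f0 : forall x, 0 <= f x) (P : @probM R T) (p : R) : 0 < p ->
  expect P (fun x => powR `|f x| p) =
  ereal_sup (range (fun N => expect P (fun x => powR `|gf ds (sN ds f N) x| p))).
Proof.
move=> p0.
have [Hle Hnd Hcv] := approx_lsc dense lf f0.
pose G N x := ((powR `|gf ds (sN ds f N) x| p)%:E : \bar R).
have mG N : measurable_fun [set: @borel R T] (G N).
  apply/measurable_EFinP; apply: mpow; apply: lsc_measurable; apply: cont_lsc.
  exact: gf_cont.
have G0 N x : [set: @borel R T] x -> (0 <= G N x)%E.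
  by move=> _; rewrite lee_fin powR_ge0.
have ndG x : [set: @borel R T] x -> nondecreasing_seq (G^~ x).
  move=> _ n m nm; rewrite lee_fin.
  apply: (ge0_ler_powR (ltW p0)); rewrite ?nnegrE //.
  by rewrite !ger0_norm ?gf_ge0 //; exact: (Hnd x _ _ nm).
have mct := monotone_convergence P measurableT mG G0 ndG.
have cv x : (fun N => powR `|gf ds (sN ds f N) x| p) @ \oo --> powR `|f x| p.
  have [fx0|fx0] := eqVneq (f x) 0.
    have e : (fun N => powR `|gf ds (sN ds f N) x| p) = (fun=> powR `|f x| p).
      apply/funext => N; congr (powR _ p).
      have := Hle N x; have := gf_ge0 ds (sN ds f N) x; rewrite fx0.
      move=> h1 h2; have -> : gf ds (sN ds f N) x = 0 by apply/eqP; rewrite eq_le h1 h2.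
      by rewrite normr0.
    by rewrite e; apply: cvg_cst.
  have fpos : 0 < `|f x| by rewrite normr_gt0.
  have h2 := powR_cont_pos (r:=p) fpos.
  have h1 : `|gf ds (sN ds f N) x| @[N --> \oo] --> `|f x| by apply: cvg_norm; exact: Hcv.
  exact: (cvg_comp _ _ h1 h2).
have e : (expect P (fun x => powR `|f x| p) =
          \int[P]_(x in [set: @borel R T]) limn (G^~ x))%E.
  apply: eq_integral => x _.
  change ((powR `|f x| p)%:E = limn (EFin \o (fun N => powR `|gf ds (sN ds f N) x| p))).
  rewrite EFin_lim; last by apply/cvg_ex; exists (powR `|f x| p); exact: cv.
  by rewrite (cvg_lim _ (cv x)).
rewrite e mct.
have ndI : nondecreasing_seq (fun N => (\int[P]_(x in [set: @borel R T]) G N x)%E).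
  move=> n m nm; apply: ge0_le_integral => //.
  + by move=> x _; rewrite /G lee_fin powR_ge0.
  + by move=> x _; apply: ndG.
exact: (cvg_lim _ (ereal_nondecreasing_cvgn ndI)).
Qed.

Lemma nrm_capLsc (ds : nat -> T)
  (dense : forall x e, 0 < e -> exists j, ball x e (ds j))
  (p : R) (p0 : 0 < p) (Rs : set (@probM R T)) (P : @probM R T) (PR : Rs P)
  (f : T -> R) (lf : lower_semicontinuous (fun x => (f x)%:E))
  (f0 : forall x, 0 <= f x) : (nrm p P f <= capLsc p Rs f)%E.
Proof.
have [Hle Hnd Hcv] := approx_lsc dense lf f0.
have capG N : (nrm p P (gf ds (sN ds f N)) <= capLsc p Rs f)%E.
  apply: (@le_trans _ _ (capCb p Rs (gf ds (sN ds f N)))).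
    by apply: ereal_sup_ubound; exists P.
  apply: ereal_sup_ubound; exists (gf ds (sN ds f N)) => //; split.
    exact: gf_Cb.
  by move=> x; rewrite gf_ge0 Hle.
apply: le_by_lt => a ha.
have [an|ap] := ltP a 0.
  apply: le_trans (capG 0%N); apply: le_trans (nrm_ge0 _ _ _).
  by rewrite lee_fin ltW.
have ip : 0 < p^-1 by rewrite invr_gt0.
have [b [b0 hb hab]] := poweR_lc ip ap (expect_ge0 _ (fun x => powR_ge0 _ _)) ha.
move: hb; rewrite (expect_pow_approx dense lf f0 P p0).
move=> /ereal_sup_gt[_ [N _ <-] hN].
apply: le_trans (capG N); apply: ltW.
apply: (@lt_le_trans _ _ (poweR b%:E p^-1)); first by rewrite poweR_EFin lte_fin.
apply: gt0_ler_poweR; first exact: ltW.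
- by rewrite in_itv /= leey andbT lee_fin.
- by rewrite in_itv /= leey andbT; apply: expect_ge0 => x; exact: powR_ge0.
exact: ltW.
Qed.
Lemma pow_lsc (f : T -> R) (p : R) : 0 < p -> continuous f ->
  lower_semicontinuous (fun x => (powR `|f x| p)%:E).
Proof.
move=> p0 cf x a; rewrite lte_fin => ha.
have [an|ap] := ltP a 0.
  exists setT; first exact: filterT.
  by move=> y _; rewrite lte_fin (lt_le_trans an) // powR_ge0.
have ip : 0 < p^-1 by rewrite invr_gt0.
pose c := powR a p^-1.
have c0 : 0 <= c by apply: powR_ge0.
have ca : powR c p = a by rewrite /c -powRrM mulVf ?gt_eqF // powRr1.
have cx : c < `|f x|.
  rewrite ltNge; apply/negP => hc.
  have := ge0_ler_powR (ltW p0) (normr_ge0 (f x)) c0 hc; rewrite ca; lra.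
have cn : continuous (fun y => `|f y|) by move=> y; apply: cvg_norm; exact: cf.
have [V Vx HV] := cont_lsc cn (cx : (c%:E < (`|f x|)%:E)%E).
exists V => // y /HV; rewrite !lte_fin => hy.
by rewrite -ca; apply: gt0_ltr_powR => //; rewrite ?nnegrE //.
Qed.

Lemma lsc_add (u h : T -> R) : continuous u ->
  lower_semicontinuous (fun x => (h x)%:E) ->
  lower_semicontinuous (fun x => (u x + h x)%:E).
Proof.
move=> cu lh x a; rewrite lte_fin => ha.
pose del := (u x + h x - a) / 2.
have hl : ((h x - del)%:E < (h x)%:E)%E by rewrite lte_fin /del; lra.
have ul : ((u x - del)%:E < (u x)%:E)%E by rewrite lte_fin /del; lra.
have [V1 V1x H1] := lh x _ hl.
have [V2 V2x H2] := cont_lsc cu ul.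
exists (V1 `&` V2); first exact: filterI.
move=> y [/H1 + /H2]; rewrite !lte_fin /del => h1 h2; lra.
Qed.

Lemma nrm_Lnorm p (P : @probM R T) (h : T -> R) :
  nrm p P h = Lnorm P p%:E (EFin \o h).
Proof.
rewrite unlock /nrm /expect; congr poweR.
all: try (apply: eq_integral => x _; by rewrite /= abse_EFin poweR_EFin).
Qed.

Lemma nrm_minkowski p (P : @probM R T) (u v : T -> R) : 1 <= p ->
  measurable_fun [set: @borel R T] u -> measurable_fun [set: @borel R T] v ->
  (nrm p P (fun x => (u x + v x)%R) <= nrm p P u + nrm p P v)%E.
Proof.
move=> p1 mu mv; rewrite !nrm_Lnorm.
exact: (minkowski_EFin P mu mv p1).
Qed.
Lemma rat_between (t t' : R) : 0 <= t -> t < t' ->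
  exists a c : nat, t < a%:R / c.+1%:R /\ a%:R / c.+1%:R < t'.
Proof.
move=> tpos tt'.
have [b hb] := ltr_add_invr tt'.
pose a := (Num.truncn (t * b.+1%:R)).+1.
have bpos : (0 < b.+1%:R :> R) by [].
exists a, b; split.
  rewrite ltr_pdivlMr // /a.
  exact: truncnS_gt.
apply: le_lt_trans hb.
have bne : (b.+1%:R != 0 :> R) by rewrite pnatr_eq0.
have ha : a%:R <= t * b.+1%:R + 1.
  by rewrite /a -natr1 lerD2r truncn_le mulr_ge0.
by rewrite ler_pdivrMr // mulrDl mulVf.
Qed.

Lemma erat_between (t : R) (E : \bar R) : 0 <= t -> (t%:E < E)%E ->
  exists a c : nat, t < a%:R / c.+1%:R /\ ((a%:R / c.+1%:R)%:E < E)%E.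
Proof.
case: E => [x| |] // t0 tx.
- rewrite lte_fin in tx; have [a [c [h1 h2]]] := rat_between t0 tx.
  by exists a, c; rewrite lte_fin.
- have tx1 : t < t + 1 by lra.
  have [a [c [h1 h2]]] := rat_between t0 tx1.
  by exists a, c; split => //; exact: ltry.
Qed.

Section Qs.
Variables (ds : nat -> T)
  (dense : forall x e, 0 < e -> exists j, ball x e (ds j))
  (Ps : set (@probM R T)) (P0 : @probM R T) (P0Ps : Ps P0).

Definition pickQ (k : seq I) (a c : nat) : @probM R T :=
  match pselect (exists Q, Ps Q /\ ((a%:R / c.+1%:R)%:E < expect Q (gf ds k))%E) with
  | left H => proj1_sig (cid H)
  | right _ => P0 end.

Lemma pickQ_Ps k a c : Ps (pickQ k a c).
Proof.
rewrite /pickQ; case: pselect => // H.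
by case: (cid H) => Q [].
Qed.

Lemma pickQ_gt k a c Q : Ps Q -> ((a%:R / c.+1%:R)%:E < expect Q (gf ds k))%E ->
  ((a%:R / c.+1%:R)%:E < expect (pickQ k a c) (gf ds k))%E.
Proof.
move=> PQ hQ; rewrite /pickQ; case: pselect => [H|nH].
  by case: (cid H) => Q' [].
by exfalso; apply: nH; exists Q.
Qed.

Definition Qs : set (@probM R T) :=
  range (fun kac : seq I * nat * nat => pickQ kac.1.1 kac.1.2 kac.2).

Lemma Qs_sub : Qs `<=` Ps.
Proof. by move=> _ [kac _ <-]; apply: pickQ_Ps. Qed.

Lemma Qs_countable : countable Qs.
Proof. exact: (sub_countable (card_image_le _ _) (countableP _)). Qed.

Lemma Qs_pick : Qs (pickQ [::] 0 0).
Proof. by exists ([::], 0%N, 0%N). Qed.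

Lemma key (g : T -> R) (lg : lower_semicontinuous (fun x => (g x)%:E))
  (g0 : forall x, 0 <= g x) (P : @probM R T) (PPs : Ps P) (b : R) :
  0 <= b -> (b%:E < expect P g)%E -> exists Q, Qs Q /\ (b%:E < expect Q g)%E.
Proof.
move=> b0 hb.
have [Hle _ _] := approx_lsc dense lg g0.
have [N hN] := expect_approx dense lg g0 hb.
have [a [c [br rE]]] := erat_between b0 hN.
exists (pickQ (sN ds g N) a c); split; first by exists (sN ds g N, a, c).
apply: (@lt_le_trans _ _ ((a%:R / c.+1%:R)%:E)); first by rewrite lte_fin.
apply: le_trans (ltW (pickQ_gt PPs rE)) _.
apply: expect_le => x; [exact: gf_ge0|exact: Hle].
Qed.

Lemma key_nrm (p : R) (p0 : 0 < p) (phi : T -> R) (cphi : continuous phi)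
  (P : @probM R T) (PPs : Ps P) (a : R) :
  (a%:E < nrm p P phi)%E -> exists Q, Qs Q /\ (a%:E < nrm p Q phi)%E.
Proof.
move=> ha.
have [an|ap] := ltP a 0.
  exists (pickQ [::] 0 0); split; first exact: Qs_pick.
  by apply: lt_le_trans (nrm_ge0 _ _ _); rewrite lte_fin.
have ip : 0 < p^-1 by rewrite invr_gt0.
have [b [b0 hb hab]] := poweR_lc ip ap (expect_ge0 _ (fun x => powR_ge0 _ _)) ha.
have [Q [QQs hQ]] := key (pow_lsc p0 cphi) (fun x => powR_ge0 _ _) PPs b0 hb.
exists Q; split => //.
apply: (@lt_le_trans _ _ (poweR b%:E p^-1)); first by rewrite poweR_EFin lte_fin.
apply: gt0_ler_poweR; first exact: ltW.
- by rewrite in_itv /= leey andbT lee_fin.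
- by rewrite in_itv /= leey andbT; apply: expect_ge0 => x; exact: powR_ge0.
exact: ltW.
Qed.
End Qs.
Section Caps.
Variables (p : R) (p1 : 1 <= p) (Ps Qs : set (@probM R T)) (Hsub : Qs `<=` Ps).
Hypothesis Hkey : forall phi, continuous phi -> forall P, Ps P -> forall a : R,
  (a%:E < nrm p P phi)%E -> exists Q, Qs Q /\ (a%:E < nrm p Q phi)%E.
Hypothesis Hnc : forall P, Ps P -> forall f : T -> R,
  lower_semicontinuous (fun x => (f x)%:E) -> (forall x, 0 <= f x) ->
  (nrm p P f <= capLsc p Ps f)%E.

Let p0 : 0 < p. Proof. by apply: lt_le_trans p1. Qed.

Lemma capCb_eq phi : continuous phi -> capCb p Ps phi = capCb p Qs phi.
Proof.
move=> cphi; apply/eqP; rewrite eq_le; apply/andP; split.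
- apply: ge_ereal_sup => _ [P PPs <-]; apply: le_by_lt => a ha.
  have [Q [QQ hQ]] := Hkey cphi PPs ha.
  apply: le_trans (ltW hQ) _; apply: ereal_sup_ubound; by exists Q.
- by apply: ereal_sup_le => _ [Q QQ <-]; exists Q => //; apply: Hsub.
Qed.

Lemma capLsc_eq : capLsc p Ps = capLsc p Qs.
Proof.
apply/funext => f; rewrite /capLsc; congr ereal_sup.
by apply/seteqP; split => _ [phi hphi <-]; exists phi => //;
  rewrite capCb_eq //; case: hphi => -[].
Qed.

Lemma cap_eq : cap p Ps = cap p Qs.
Proof. by apply/funext => g; rewrite /cap capLsc_eq. Qed.

Lemma inL1_eq g : inL1 p Ps g <-> inL1 p Qs g.
Proof. by rewrite /inL1 cap_eq. Qed.

Lemma claim1_ge X : (ereal_sup [set nrm p P X | P in Qs] <= cap p Ps X)%E.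
Proof.
apply: le_ereal_inf_tmp => _ [f [lf fX] <-].
have f0 x : 0 <= f x by apply: le_trans (normr_ge0 _) (fX x).
apply: ge_ereal_sup => _ [Q QQ <-].
apply: le_trans (Hnc (Hsub QQ) lf f0).
by apply: nrm_le => // x; rewrite (ger0_norm (f0 x)).
Qed.

Lemma claim1 X : inL1 p Ps X -> cap p Ps X = ereal_sup [set nrm p P X | P in Qs].
Proof.
move=> [_ hL]; apply/eqP; rewrite eq_le claim1_ge andbT.
set S := ereal_sup _.
apply/lee_addgt0Pr => e e0.
have e20 : 0 < e / 2 by rewrite divr_gt0.
have [phi [[cphi _] hphi]] := hL _ e20.
move: hphi => /ereal_inf_lt [_ [h [lh hX] <-] hh].
have h0 x : 0 <= h x by apply: le_trans (normr_ge0 _) (hX x).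
pose f x := `|phi x| + h x.
have cn : continuous (fun y => `|phi y|) by move=> y; apply: cvg_norm; exact: cphi.
have lf : lower_semicontinuous (fun x => (f x)%:E) by apply: lsc_add.
have tri x : `|phi x| <= `|X x| + h x.
  have e1 : phi x = X x - (X x - phi x) by ring.
  rewrite [in X in X <= _]e1; apply: le_trans (ler_normB _ _) _.
  by rewrite lerD2l; exact: hX.
have tri2 x : `|X x| <= f x.
  have e1 : X x = phi x + (X x - phi x) by ring.
  rewrite [in X in X <= _]e1; apply: le_trans (ler_normD _ _) _.
  by rewrite /f lerD2l; exact: hX.
have mh : measurable_fun [set: @borel R T] h by apply: lsc_measurable.
have mphi : measurable_fun [set: @borel R T] (fun x => `|phi x|).
  by apply: lsc_measurable; apply: cont_lsc.
have hsmall P : Ps P -> (nrm p P h <= (e / 2)%:E)%E.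
  by move=> PPs; apply: le_trans (Hnc PPs lh h0) (ltW hh).
have stepQ Q : Qs Q -> (nrm p Q phi <= S + (e / 2)%:E)%E.
  move=> QQ.
  pose u x := Num.max (`|phi x| - h x) 0.
  have mu : measurable_fun [set: @borel R T] u.
    have := @measurable_maxr _ _ R [set: @borel R T] (fun x => `|phi x| - h x) (cst 0)
      (measurable_funB mphi mh) (measurable_cst _).
    exact.
  have u0 x : 0 <= u x by rewrite /u le_max lexx orbT.
  apply: (@le_trans _ _ (nrm p Q (fun x => (u x + h x)%R))).
    apply: nrm_le => // x; rewrite (ger0_norm (addr_ge0 (u0 x) (h0 x))).
    rewrite /u; have [hm|hm] := leP (`|phi x| - h x) 0.
      lra.
    lra.
  apply: le_trans (nrm_minkowski Q p1 mu mh) _.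
  apply: leeD; last exact: hsmall (Hsub QQ).
  apply: (@le_trans _ _ (nrm p Q X)); last by apply: ereal_sup_ubound; exists Q.
  apply: nrm_le => // x; rewrite (ger0_norm (u0 x)) /u.
  have [hm|hm] := leP (`|phi x| - h x) 0.
    exact: normr_ge0.
  by have := tri x; lra.
have stepP P : Ps P -> (nrm p P phi <= S + (e / 2)%:E)%E.
  move=> PPs; apply: le_by_lt => a ha.
  have [Q [QQ hQ]] := Hkey cphi PPs ha.
  exact: le_trans (ltW hQ) (stepQ Q QQ).
apply: le_trans (_ : (cap p Ps X <= capLsc p Ps f)%E) _.
  by apply: ereal_inf_lbound; exists f.
apply: ge_ereal_sup => _ [phi' [_ hp'] <-].
apply: ge_ereal_sup => _ [P PPs <-].
have f0 x : 0 <= f x by rewrite /f addr_ge0.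
apply: (@le_trans _ _ (nrm p P f)).
  apply: nrm_le => // x; rewrite (ger0_norm (f0 x)).
  by have /andP[h1 h2] := hp' x; rewrite ger0_norm.
apply: le_trans (nrm_minkowski P p1 mphi mh) _.
have -> : nrm p P (fun x => `|phi x|) = nrm p P phi.
  by rewrite /nrm; congr poweR; congr expect; apply/funext => x; rewrite normr_id.
have -> : e = e / 2 + e / 2 by field.
rewrite EFinD addeA.
by apply: leeD; [exact: stepP|exact: hsmall].
Qed.
End Caps.
Lemma point_of_prob (P : @probM R T) : exists x : T, True.
Proof.
apply: contrapT => hn.
have e : [set: @borel R T] = set0.
  by apply/seteqP; split => x // _; apply: hn; exists x.
have := @probability_setT _ _ _ P; rewrite e measure0 => -[] /eqP.
by rewrite eq_sym oner_eq0.
Qed.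

Lemma dense_seq (polT : polish T) (x0 : T) :
  exists ds : nat -> T, forall x e, 0 < e -> exists j, ball x e (ds j).
Proof.
case: polT => _ [D [cD clD]].
have [d0 Dd0] : exists d0, D d0.
  have : closure D x0 by rewrite clD.
  move=> /(_ _ (nbhsx_ballx x0 1 ltr01)) [y [Dy _]]; by exists y.
move/countable_injP : cD => [f finj].
pose ds j := match pselect (exists x, D x /\ f x = j) with
  | left H => proj1_sig (cid H) | right _ => d0 end.
exists ds => x e e0.
have : closure D x by rewrite clD.
move=> /(_ _ (nbhsx_ballx x e e0)) [y [Dy bxy]].
exists (f y); rewrite /ds; case: pselect => [H|nH]; last first.
  by exfalso; apply: nH; exists y.
case: (cid H) => y' [Dy' fy'] /=.
by have -> : y' = y by apply: finj => //; rewrite inE.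
Qed.
End S.

Unset Implicit Arguments.

Theorem theorem4p3 (R : realType) (T : completePseudoMetricType R)
  (polT : polish T) (Ps : set (@probM R T))
  (hPs : weakly_relatively_compact Ps) :
  exists Qs : set (@probM R T),
    [/\ Qs `<=` Ps, countable Qs &
    forall p : R, 1 <= p ->
      [/\ (forall X : T -> R, inL1 p Ps X ->
             cap p Ps X =
             ereal_sup [set poweR (expect P (fun x => powR `|X x| p)) p^-1
                       | P in Qs]),
          (forall g : T -> R, cap p Ps g = cap p Qs g) &
          (forall g : T -> R, inL1 p Ps g <-> inL1 p Qs g)]].
Proof.
have [[P0 P0Ps]|Pe] := pselect (exists P, Ps P); last first.
  exists Ps; split => //.
    have -> : Ps = set0 by apply/seteqP; split => P // PP; apply: Pe; exists P.
    exact: countable0.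
  move=> p p1; split => //.
  move=> X hX.
  have Hkey : forall phi, continuous phi -> forall P, Ps P -> forall a : R,
    (a%:E < nrm p P phi)%E -> exists Q, Ps Q /\ (a%:E < nrm p Q phi)%E.
    by move=> phi _ P PP; exfalso; apply: Pe; exists P.
  have Hnc : forall P, Ps P -> forall f : T -> R,
    lower_semicontinuous (fun x => (f x)%:E) -> (forall x, 0 <= f x) ->
    (nrm p P f <= capLsc p Ps f)%E.
    by move=> P PP; exfalso; apply: Pe; exists P.
  exact: (claim1 p1 (fun _ h => h) Hkey Hnc hX).
have [x0 _] := point_of_prob P0.
have [ds dense] := dense_seq polT x0.
exists (Qs ds Ps P0); split.
- exact: Qs_sub.
- exact: Qs_countable.
move=> p p1.
have p0 : 0 < p by apply: lt_le_trans p1.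
have Hsub := @Qs_sub _ _ ds Ps P0 P0Ps.
have Hkey : forall phi, continuous phi -> forall P, Ps P -> forall a : R,
    (a%:E < nrm p P phi)%E -> exists Q, Qs ds Ps P0 Q /\ (a%:E < nrm p Q phi)%E.
  by move=> phi cphi P PP a ha; apply: (key_nrm dense P0 p0 cphi PP ha).
have Hnc : forall P, Ps P -> forall f : T -> R,
    lower_semicontinuous (fun x => (f x)%:E) -> (forall x, 0 <= f x) ->
    (nrm p P f <= capLsc p Ps f)%E.
  by move=> P PP f lf f0; apply: (nrm_capLsc dense p0 PP lf f0).
split.
- move=> X hX; exact: (claim1 p1 Hsub Hkey Hnc hX).
- by move=> g; rewrite (cap_eq Hsub Hkey).
- by move=> g; apply: (inL1_eq Hsub Hkey).
Qed.
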